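(* Consider a tree power network $(\mathcal{V},\mathcal{E})$, $\mathcal{V}=\{1,\dots,n\}$, with variable voltage magnitudes $\underline{V}_i\le|V_i|\le\overline{V}_i$ ($0<\underline{V}_i\le\overline{V}_i$), angle limits $\underline{\theta}_{ik}\le 0\le\overline{\theta}_{ik}$ with $|\underline{\theta}_{ik}|,|\overline{\theta}_{ik}|<90^\circ$, and bus power upper bounds $P_i\le\overline{P}_i$ (no lower bounds). Let $\mathcal{P}_\theta=\bigcup_{\underline{\mathbf{v}}\le\tilde{\mathbf{v}}\le\overline{\mathbf{v}}}\mathcal{P}_\theta(\tilde{\mathbf{v}})$, $\mathcal{P}=\mathcal{P}_\theta\cap\mathcal{P}_P$, and $\overline{\mathrm{conv}}(\mathcal{P}_\theta)=\bigcup_{\underline{\mathbf{v}}\le\tilde{\mathbf{v}}\le\overline{\mathbf{v}}}\overline{\mathrm{conv}}(\mathcal{P}_\theta(\tilde{\mathbf{v}}))$. Then $$\mathcal{O}(\mathcal{P})=\mathcal{O}(\mathrm{conv}(\mathcal{P}))=\mathcal{O}(\overline{\mathrm{conv}}(\mathcal{P}_\theta)\cap\mathcal{P}_P).$$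
   Context: Each line $(i,k)$ has admittance $y_{ik}=g_{ik}-jb_{ik}$, $g_{ik},b_{ik}\ge0$. $\underline{\mathbf{v}}=(\underline V_1,\dots,\underline V_n)$, $\overline{\mathbf{v}}=(\overline V_1,\dots,\overline V_n)$. For fixed voltage magnitudes $|V_i|=\tilde V_i$, the flows on line $(i,k)$ with $\theta_{ik}=\theta_i-\theta_k$ are $P_{ik}=\tilde V_i^2 g_{ik}+\tilde V_i\tilde V_k b_{ik}\sin\theta_{ik}-\tilde V_i\tilde V_k g_{ik}\cos\theta_{ik}$, $P_{ki}=\tilde V_k^2 g_{ik}-\tilde V_i\tilde V_k b_{ik}\sin\theta_{ik}-\tilde V_i\tilde V_k g_{ik}\cos\theta_{ik}$; $\mathcal{F}_{\theta_{ik}}(\tilde{\mathbf{v}})$ is the set of such $(P_{ik},P_{ki})$ for $\theta_{ik}\in[\underline{\theta}_{ik},\overline{\theta}_{ik}]$. $\mathbf{A}$ is the $n\times2|\mathcal{E}|$ matrix with $A(i,(k,l))=1$ if $i=k$ and $0$ otherwise (so $(\mathbf{A}\mathbf{f})_i=\sum_{k\sim i}P_{ik}$). $\mathcal{P}_\theta(\tilde{\mathbf{v}})=\mathbf{A}\prod_{(i,k)\in\mathcal{E}}\mathcal{F}_{\theta_{ik}}(\tilde{\mathbf{v}})$ and $\mathcal{P}_P=\{\mathbf{p}:P_i\le\overline{P}_i\ \forall i\}$. For a Hermitian $n\times n$ matrix $\mathbf{W}$, $W_{ik}$ is its $(i,k)$ entry and $\mathbf{W}_{ik}$ its $2\times2$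 submatrix on rows/columns $i,k$. $\mathcal{H}_{ik}(\tilde{\mathbf{v}})$ is the set of Hermitian $\mathbf{W}$ with $\mathbf{W}_{ik}$ positive semidefinite, $W_{ii}=\tilde V_i^2$, $W_{kk}=\tilde V_k^2$, and $\tan(\underline{\theta}_{ik})\mathrm{Re}(W_{ik})\le\mathrm{Im}(W_{ik})\le\tan(\overline{\theta}_{ik})\mathrm{Re}(W_{ik})$. With $\mathbf{Y}_{ik}=\begin{bmatrix}y_{ik}&-y_{ik}\\-y_{ik}&y_{ik}\end{bmatrix}$, $\overline{\mathrm{conv}}(\mathcal{F}_{\theta_{ik}}(\tilde{\mathbf{v}}))=\{\mathrm{Re}(\mathrm{diag}(\mathbf{W}_{ik}\mathbf{Y}_{ik}^H)):\mathbf{W}\in\mathcal{H}_{ik}(\tilde{\mathbf{v}})\}$ and $\overline{\mathrm{conv}}(\mathcal{P}_\theta(\tilde{\mathbf{v}}))=\mathbf{A}\prod_{(i,k)}\overline{\mathrm{conv}}(\mathcal{F}_{\theta_{ik}}(\tilde{\mathbf{v}}))$. $\mathcal{O}(\mathcal{A})$ is the set of Pareto-optimal points of $\mathcal{A}$ (no $y\in\mathcal{A}$ with $y\le x$ componentwise, strict in some coordinate); $\mathrm{conv}$ is the convex hull. *)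

(* Defs.v *)
From HB Require Import structures.
From mathcomp Require Import all_boot all_order all_algebra.
From mathcomp Require Import all_classical all_reals all_analysis.
Set Implicit Arguments. Unset Strict Implicit. Unset Printing Implicit Defensive.
Import Order.TTheory GRing.Theory Num.Theory.
Local Open Scope ring_scope.

Section PowerNet.
Variables (R : realType) (n : nat).

(* (V,E) is a tree: a line (i,k) is stored once as an ordered pair;
   no self loops, no line stored in both orientations, |E| = n-1, connected. *)
Definition is_tree (E : {set 'I_n * 'I_n}) : Prop :=
  [/\ (0 < n)%N,
      (forall e, e \in E -> e.1 != e.2),
      (forall i k, (i, k) \in E -> (k, i) \notin E),
      #|E| = n.-1
    & forall i j : 'I_n,
        connect (fun x y : 'I_n => ((x, y) \in E) || ((y, x) \in E)) i j].

Definition Pfw (g b : 'I_n -> 'I_n -> R) (v : 'I_n -> R)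
    (e : 'I_n * 'I_n) (th : R) : R :=
  v e.1 ^+ 2 * g e.1 e.2 + v e.1 * v e.2 * b e.1 e.2 * sin th
  - v e.1 * v e.2 * g e.1 e.2 * cos th.

Definition Pbw (g b : 'I_n -> 'I_n -> R) (v : 'I_n -> R)
    (e : 'I_n * 'I_n) (th : R) : R :=
  v e.2 ^+ 2 * g e.1 e.2 - v e.1 * v e.2 * b e.1 e.2 * sin th
  - v e.1 * v e.2 * g e.1 e.2 * cos th.

(* P_theta(v) = A * prod_{(i,k) in E} F_theta_ik(v):
   p_i = sum of the flows leaving bus i, each line having its own angle
   theta_ik in [thlo_ik, thhi_ik]. *)
Definition Ptheta_v (E : {set 'I_n * 'I_n}) (g b thlo thhi : 'I_n -> 'I_n -> R)
    (v : 'I_n -> R) (p : 'I_n -> R) : Prop :=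
  exists th : 'I_n * 'I_n -> R,
    (forall e, e \in E -> thlo e.1 e.2 <= th e <= thhi e.1 e.2) /\
    forall i : 'I_n,
      p i = \sum_(e in E | e.1 == i) Pfw g b v e (th e)
          + \sum_(e in E | e.2 == i) Pbw g b v e (th e).

Definition in_box (vlo vhi v : 'I_n -> R) : Prop :=
  forall i, vlo i <= v i <= vhi i.

Definition PP (Pbar : 'I_n -> R) (p : 'I_n -> R) : Prop := forall i, p i <= Pbar i.

Definition cvxhull (A : ('I_n -> R) -> Prop) (x : 'I_n -> R) : Prop :=
  exists (k : nat) (lam : 'I_k -> R) (pts : 'I_k -> 'I_n -> R),
    [/\ (forall j, 0 <= lam j), \sum_(j < k) lam j = 1,
        (forall j, A (pts j))
      & forall i, x i = \sum_(j < k) lam j * pts j i].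

Definition clos (A : ('I_n -> R) -> Prop) (x : 'I_n -> R) : Prop :=
  forall eps : R, 0 < eps -> exists y, A y /\ forall i, `|x i - y i| < eps.

Definition ccvxhull (A : ('I_n -> R) -> Prop) : ('I_n -> R) -> Prop := clos (cvxhull A).

Definition pareto (A : ('I_n -> R) -> Prop) (x : 'I_n -> R) : Prop :=
  A x /\ ~ (exists y, A y /\ (forall i, y i <= x i) /\ exists i, y i < x i).

End PowerNet.

(* Main.v *)
Require Import Defs.
From HB Require Import structures.
From mathcomp Require Import all_boot all_order all_algebra.
From mathcomp Require Import all_classical all_reals all_analysis.
From mathcomp Require Import ring lra.
Import Order.TTheory GRing.Theory Num.Theory.
Import numFieldNormedType.Exports.
Local Open Scope ring_scope.

Lemma cone_lo {R : realType} {X Y Rr c s : R} : 0 <= X -> X^+2 + Y^+2 <= Rr^+2 ->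
  0 < c -> s <= 0 -> c^+2 + s^+2 = 1 -> X * s <= Y * c -> 0 <= Rr -> Rr * s <= Y.
Proof.
move=> X0 XY c0 s0 cs XsY R0.
rewrite leNgt; apply/negP => HY.
have q0 : 0 <= - (Rr * s) by nra.
have q1 : 0 < (- Y) - (- (Rr * s)) by lra.
have q2 : 0 < (- Y) + (- (Rr * s)) by lra.
have h1 : Rr^+2 * s^+2 < Y^+2.
  have := mulr_gt0 q1 q2. nra.
have e1 : Rr^+2 * c^+2 = Rr^+2 - Rr^+2 * s^+2.
  have -> : c^+2 = 1 - s^+2 by rewrite -cs; ring.
  ring.
have h2 : X^+2 < Rr^+2 * c^+2 by lra.
have Rc0 : 0 <= Rr * c by nra.
have h3 : X < Rr * c.
  rewrite ltNge; apply/negP => H.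
  have := ler_pM Rc0 Rc0 H H. nra.
have h4 : Rr * c * s <= X * s by nra.
nra.
Qed.

Lemma quad {R : realType} {X1 Y1 X2 Y2 a1 b1 a2 b2 l m : R} :
  X1^+2 + Y1^+2 <= a1 * b1 -> X2^+2 + Y2^+2 <= a2 * b2 ->
  0 <= a1 -> 0 <= b1 -> 0 <= a2 -> 0 <= b2 -> 0 <= l -> 0 <= m ->
  (l * X1 + m * X2)^+2 + (l * Y1 + m * Y2)^+2 <= (l * a1 + m * a2) * (l * b1 + m * b2).
Proof.
move=> h1 h2 a10 b10 a20 b20 l0 m0.
have cs : (X1 * X2 + Y1 * Y2)^+2 <= (X1^+2 + Y1^+2) * (X2^+2 + Y2^+2).
  have e : (X1^+2 + Y1^+2) * (X2^+2 + Y2^+2) = (X1 * X2 + Y1 * Y2)^+2 + (X1 * Y2 - X2 * Y1)^+2 by ring.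
  rewrite e; have := sqr_ge0 (X1 * Y2 - X2 * Y1); lra.
have p1 : (X1^+2 + Y1^+2) * (X2^+2 + Y2^+2) <= (a1 * b1) * (a2 * b2).
  apply: ler_pM => //; nra.
have p2 : 4 * ((a1 * b1) * (a2 * b2)) <= (a1 * b2 + a2 * b1)^+2.
  have e : (a1 * b2 + a2 * b1)^+2 = 4 * ((a1 * b1) * (a2 * b2)) + (a1 * b2 - a2 * b1)^+2 by ring.
  rewrite e; have := sqr_ge0 (a1 * b2 - a2 * b1); lra.
have s0 : 0 <= a1 * b2 + a2 * b1 by nra.
have key : 2 * (X1 * X2 + Y1 * Y2) <= a1 * b2 + a2 * b1.
  rewrite leNgt; apply/negP => H.
  have H2 := ltr_pM s0 s0 H H.
  have : (2 * (X1 * X2 + Y1 * Y2)) * (2 * (X1 * X2 + Y1 * Y2)) = 4 * (X1 * X2 + Y1 * Y2)^+2 by ring.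
  nra.
have lm : 0 <= l * m by nra.
nra.
Qed.

Lemma sq_le_le {R : realType} (a c : R) : 0 <= a -> 0 <= c -> a ^+ 2 <= c ^+ 2 -> a <= c.
Proof.
move=> a0 c0 h; rewrite leNgt; apply/negP => H.
have := ltr_pM c0 c0 H H. nra.
Qed.


Lemma cvx_closed {R : realType} {n : nat} (A : ('I_n -> R) -> Prop) :
  (forall p q l, A p -> A q -> 0 <= l <= 1 -> A (fun i => l * p i + (1 - l) * q i)) ->
  forall x, cvxhull A x -> A x.
Proof.
move=> cvA x [k [lam [pts [l0 l1 Apts xE]]]].
elim: k lam pts l0 l1 Apts x xE => [|k IH] lam pts l0 l1 Apts x xE.
  by move: l1; rewrite big_ord0 => /eqP; rewrite eq_sym oner_eq0.
move: l1; rewrite big_ord_recr /= => l1.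
set L := lam ord_max in l1.
have s0 : 0 <= \sum_(j < k) lam (widen_ord (leqnSn k) j) by apply: sumr_ge0 => j _.
have L0 : 0 <= L by exact: l0.
have [L1|L1] := eqVneq L 1.
  have s1 : \sum_(j < k) lam (widen_ord (leqnSn k) j) = 0 by lra.
  have z j : lam (widen_ord (leqnSn k) j) = 0.
    by apply: (psumr_eq0P _ s1) => // i _.
  have -> : x = pts ord_max.
    apply: funext => i; rewrite xE big_ord_recr /= big1 ?add0r.
      by rewrite -/L L1 mul1r.
    by move=> j _; rewrite z mul0r.
  exact: Apts.
have Llt : L < 1 by rewrite lt_neqAle L1 /=; lra.
set mu := 1 - L.
have mu0 : 0 < mu by rewrite /mu; lra.
pose lam' := fun j : 'I_k => lam (widen_ord (leqnSn k) j) / mu.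
pose pts' := fun j : 'I_k => pts (widen_ord (leqnSn k) j).
pose y := fun i => \sum_(j < k) lam' j * pts' j i.
have Ay : A y.
  apply: (IH lam' pts') => //.
  - by move=> j; rewrite /lam' divr_ge0 // ltW.
  - rewrite /lam' -mulr_suml.
    have -> : \sum_(j < k) lam (widen_ord (leqnSn k) j) = mu by rewrite /mu; lra.
    by rewrite mulfV // gt_eqF.
  - by move=> j; exact: Apts.
have := cvA (pts ord_max) y L (Apts _) Ay.
have LL : 0 <= L <= 1 by apply/andP; split; lra.
move=> /(_ LL).
have -> : x = (fun i => L * pts ord_max i + (1 - L) * y i); last by [].
apply: funext => i; rewrite xE big_ord_recr /= addrC; congr (_ + _).
rewrite /y mulr_sumr; apply: eq_bigr => j _; rewrite /lam' /pts' -/mu.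
by field; rewrite gt_eqF.
Qed.

Lemma pareto_sub {R : realType} {n : nat} (A B : ('I_n -> R) -> Prop) x :
  (forall p, A p -> B p) -> (forall p, B p -> exists a, A a /\ forall i, a i <= p i) ->
  pareto A x <-> pareto B x.
Proof.
move=> AB BA; split.
- move=> [Ax nd]; split; first exact: AB.
  move=> [y [By [yx [i yi]]]]; have [a [Aa ay]] := BA y By.
  apply: nd; exists a; split => //; split.
    by move=> j; exact: le_trans (ay j) (yx j).
  by exists i; exact: le_lt_trans (ay i) yi.
- move=> [Bx nd]; have [a [Aa ax]] := BA x Bx.
  have ea : a = x.
    apply: funext => i; apply/eqP; rewrite eq_le ax /=; rewrite leNgt; apply/negP => H.
    apply: nd; exists a; split; first exact: AB.
    by split => //; exists i.
  rewrite -ea; split => //.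
  move=> [y [Ay [yx [i yi]]]]; apply: nd; exists y; split; first exact: AB.
  by rewrite -ea; split => //; exists i.
Qed.

Section Main.
Variables (R : realType) (n : nat) (E : {set 'I_n * 'I_n})
  (g b thlo thhi : 'I_n -> 'I_n -> R) (vlo vhi Pbar : 'I_n -> R).
Hypothesis gb0 : forall e, e \in E -> 0 <= g e.1 e.2 /\ 0 <= b e.1 e.2.
Hypothesis thr : forall e, e \in E ->
     [/\ thlo e.1 e.2 <= 0, 0 <= thhi e.1 e.2,
         - (pi / 2) < thlo e.1 e.2 & thhi e.1 e.2 < pi / 2].
Hypothesis vpos : forall i, 0 < vlo i /\ vlo i <= vhi i.

Definition flow (v : 'I_n -> R) (th : 'I_n * 'I_n -> R) (i : 'I_n) : R :=
  \sum_(e in E | e.1 == i) Pfw g b v e (th e) + \sum_(e in E | e.2 == i) Pbw g b v e (th e).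

Definition inK (th : 'I_n * 'I_n -> R) :=
  forall e, e \in E -> thlo e.1 e.2 <= th e <= thhi e.1 e.2.

Definition F1 (u : 'I_n -> R) (e : 'I_n * 'I_n) (X Y : R) :=
  u e.1 * g e.1 e.2 + b e.1 e.2 * Y - g e.1 e.2 * X.
Definition F2 (u : 'I_n -> R) (e : 'I_n * 'I_n) (X Y : R) :=
  u e.2 * g e.1 e.2 - b e.1 e.2 * Y - g e.1 e.2 * X.
Definition rflow (u : 'I_n -> R) (X Y : 'I_n * 'I_n -> R) (i : 'I_n) : R :=
  \sum_(e in E | e.1 == i) F1 u e (X e) (Y e) + \sum_(e in E | e.2 == i) F2 u e (X e) (Y e).
Definition feas (u : 'I_n -> R) (X Y : 'I_n * 'I_n -> R) :=
  forall e, e \in E -> [/\ 0 <= X e, X e ^+ 2 + Y e ^+ 2 <= u e.1 * u e.2,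
     X e * sin (thlo e.1 e.2) <= Y e * cos (thlo e.1 e.2)
   & Y e * cos (thhi e.1 e.2) <= X e * sin (thhi e.1 e.2)].
Definition Rel (u : 'I_n -> R) (p : 'I_n -> R) :=
  exists X Y, feas u X Y /\ forall i, rflow u X Y i <= p i.
Definition Ubox (u : 'I_n -> R) := forall i, vlo i ^+ 2 <= u i <= vhi i ^+ 2.

Lemma pi2_gt0 : 0 < pi / 2 :> R.
Proof. by rewrite divr_gt0 // pi_gt0. Qed.

Lemma arc_rel v th : in_box vlo vhi v -> inK th ->
  feas (fun i => v i ^+ 2) (fun e => v e.1 * v e.2 * cos (th e))
       (fun e => v e.1 * v e.2 * sin (th e)) /\
  forall i, rflow (fun i => v i ^+ 2) (fun e => v e.1 * v e.2 * cos (th e))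
       (fun e => v e.1 * v e.2 * sin (th e)) i = flow v th i.
Proof.
move=> vb thK; split.
  move=> e eE; have [lo0 hi0 lop hip] := thr e eE.
  have /andP[l1 l2] := thK e eE.
  have v1 : 0 <= v e.1 by have [h _] := vpos e.1; have /andP[h1 _] := vb e.1; lra.
  have v2 : 0 <= v e.2 by have [h _] := vpos e.2; have /andP[h1 _] := vb e.2; lra.
  have vv : 0 <= v e.1 * v e.2 by exact: mulr_ge0.
  have p2 := pi2_gt0.
  have c0 : 0 <= cos (th e) by apply: cos_ge0_pihalf; apply/andP; split; lra.
  have hpi : pi = pi / 2 + pi / 2 :> R by field.
  split.
  - exact: mulr_ge0.
  - have -> : (v e.1 * v e.2 * cos (th e)) ^+ 2 + (v e.1 * v e.2 * sin (th e)) ^+ 2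
       = (v e.1 ^+ 2 * v e.2 ^+ 2) * (cos (th e) ^+ 2 + sin (th e) ^+ 2) by ring.
    by rewrite cos2Dsin2 mulr1.
  - have s0 : 0 <= sin (th e - thlo e.1 e.2).
      by apply: sin_ge0_pi; apply/andP; split; lra.
    move: s0; rewrite sinB => s0; nra.
  - have s0 : 0 <= sin (thhi e.1 e.2 - th e).
      by apply: sin_ge0_pi; apply/andP; split; lra.
    move: s0; rewrite sinB => s0; nra.
move=> i; rewrite /rflow /flow; congr (_ + _); apply: eq_bigr => e _;
  rewrite /F1 /F2 /Pfw /Pbw; ring.
Qed.


Lemma sin_le0_lo e : e \in E -> sin (thlo e.1 e.2) <= 0.
Proof.
move=> eE; have [lo0 hi0 lop hip] := thr e eE; have p2 := pi2_gt0.
have hpi : pi = pi / 2 + pi / 2 :> R by field.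
have : 0 <= sin (- thlo e.1 e.2) by apply: sin_ge0_pi; apply/andP; split; lra.
rewrite sinN; lra.
Qed.

Lemma sin_ge0_hi e : e \in E -> 0 <= sin (thhi e.1 e.2).
Proof.
move=> eE; have [lo0 hi0 lop hip] := thr e eE; have p2 := pi2_gt0.
have hpi : pi = pi / 2 + pi / 2 :> R by field.
by apply: sin_ge0_pi; apply/andP; split; lra.
Qed.

Lemma dom_edge u X Y e : Ubox u -> feas u X Y -> e \in E ->
  let v := fun i => Num.sqrt (u i) in
  let t := asin (Y e / (v e.1 * v e.2)) in
  [/\ thlo e.1 e.2 <= t <= thhi e.1 e.2,
      Pfw g b v e t <= F1 u e (X e) (Y e)
    & Pbw g b v e t <= F2 u e (X e) (Y e)].
Proof.
move=> ub fe eE v t.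
have [X0 XY Xlo Xhi] := fe e eE.
have [lo0 hi0 lop hip] := thr e eE; have p2 := pi2_gt0.
have [G0 B0] := gb0 e eE.
have u0 i : 0 < u i.
  have [h _] := vpos i; have /andP[h1 _] := ub i.
  by apply: lt_le_trans h1; rewrite exprn_gt0.
have v1 : 0 < v e.1 by rewrite /v sqrtr_gt0.
have v2 : 0 < v e.2 by rewrite /v sqrtr_gt0.
have vs1 : v e.1 ^+ 2 = u e.1 by rewrite /v sqr_sqrtr // ltW.
have vs2 : v e.2 ^+ 2 = u e.2 by rewrite /v sqr_sqrtr // ltW.
set Rr := v e.1 * v e.2.
have R0 : 0 < Rr by rewrite mulr_gt0.
have RR : Rr ^+ 2 = u e.1 * u e.2 by rewrite /Rr exprMn vs1 vs2.
set s := Y e / Rr.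
have Ys : Y e = Rr * s by rewrite /s mulrC divfK // gt_eqF.
rewrite -/s in t *.
have s2 : s ^+ 2 <= 1.
  have : Rr ^+ 2 * s ^+ 2 <= Rr ^+ 2 * 1.
    rewrite -exprMn -Ys mulr1 RR; have := sqr_ge0 (X e); lra.
  by rewrite ler_pM2l // exprn_gt0.
have sm : -1 <= s <= 1 by apply/andP; split; nra.
have sin_t : sin t = s by rewrite /t asinK // in_itv /= sm.
have cos_t : cos t = Num.sqrt (1 - s ^+ 2) by rewrite /t cos_asin.
have tin : t \in `[(- (pi / 2)), pi / 2].
  by rewrite in_itv /= asin_geNpi2 // asin_lepi2.
have loin : thlo e.1 e.2 \in `[(- (pi / 2)), pi / 2].
  by rewrite in_itv /=; apply/andP; split; lra.
have hiin : thhi e.1 e.2 \in `[(- (pi / 2)), pi / 2].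
  by rewrite in_itv /=; apply/andP; split; lra.
have clo : 0 < cos (thlo e.1 e.2) by apply: cos_gt0_pihalf; apply/andP; split; lra.
have chi : 0 < cos (thhi e.1 e.2) by apply: cos_gt0_pihalf; apply/andP; split; lra.
have slo := sin_le0_lo e eE; have shi := sin_ge0_hi e eE.
have cslo : cos (thlo e.1 e.2) ^+ 2 + sin (thlo e.1 e.2) ^+ 2 = 1 by exact: cos2Dsin2.
have cshi : cos (thhi e.1 e.2) ^+ 2 + (- sin (thhi e.1 e.2)) ^+ 2 = 1.
  by rewrite sqrrN; exact: cos2Dsin2.
have XYR : X e ^+ 2 + Y e ^+ 2 <= Rr ^+ 2 by rewrite RR.
have Hlo : Rr * sin (thlo e.1 e.2) <= Y e.
  have := (cone_lo X0 XYR clo slo cslo Xlo (ltW R0)). by [].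
have Hhi : Rr * sin (thhi e.1 e.2) >= Y e.
  have XYR' : X e ^+ 2 + (- Y e) ^+ 2 <= Rr ^+ 2 by rewrite sqrrN.
  have : Rr * - sin (thhi e.1 e.2) <= - Y e.
    apply: (cone_lo X0 XYR' chi _ cshi _ (ltW R0)); lra.
  lra.
have slo' : sin (thlo e.1 e.2) <= s by rewrite -(ler_pM2l R0) -Ys.
have shi' : s <= sin (thhi e.1 e.2) by rewrite -(ler_pM2l R0) -Ys.
have Xle : X e <= Rr * Num.sqrt (1 - s ^+ 2).
  apply: sq_le_le => //; first by rewrite mulr_ge0 // ?sqrtr_ge0 // ltW.
  rewrite exprMn sqr_sqrtr; last lra.
  have : Rr ^+ 2 * (1 - s ^+ 2) = Rr ^+ 2 - Y e ^+ 2 by rewrite Ys; ring.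
  move=> ->; lra.
have GX : g e.1 e.2 * X e <= g e.1 e.2 * (Rr * Num.sqrt (1 - s ^+ 2)) by exact: ler_wpM2l.
split.
- apply/andP; split.
  + rewrite leNgt; apply/negP => H.
    by move: H; rewrite -(ltr_sin tin loin) sin_t => H; lra.
  + rewrite leNgt; apply/negP => H.
    by move: H; rewrite -(ltr_sin hiin tin) sin_t => H; lra.
- rewrite /Pfw /F1 sin_t cos_t vs1 -/Rr Ys; lra.
- rewrite /Pbw /F2 sin_t cos_t vs2 -/Rr Ys; lra.
Qed.


Lemma dom u X Y : Ubox u -> feas u X Y ->
  exists th, inK th /\ forall i, flow (fun i => Num.sqrt (u i)) th i <= rflow u X Y i.
Proof.
move=> ub fe.
exists (fun e => asin (Y e / (Num.sqrt (u e.1) * Num.sqrt (u e.2)))); split.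
  by move=> e eE; have /= [] := dom_edge u X Y e ub fe eE.
move=> i; rewrite /flow /rflow; apply: lerD; apply: ler_sum => e /andP[eE _];
  by have /= [] := dom_edge u X Y e ub fe eE.
Qed.

Lemma Ubox_ge0 u i : Ubox u -> 0 <= u i.
Proof. by move=> ub; have /andP[h _] := ub i; apply: le_trans h; exact: sqr_ge0. Qed.

Lemma rel_convex u1 u2 p1 p2 l : Ubox u1 -> Ubox u2 -> Rel u1 p1 -> Rel u2 p2 -> 0 <= l <= 1 ->
  Rel (fun i => l * u1 i + (1 - l) * u2 i) (fun i => l * p1 i + (1 - l) * p2 i).
Proof.
move=> ub1 ub2 [X1 [Y1 [f1 r1]]] [X2 [Y2 [f2 r2]]] /andP[l0 l1].
have m0 : 0 <= 1 - l by lra.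
exists (fun e => l * X1 e + (1 - l) * X2 e), (fun e => l * Y1 e + (1 - l) * Y2 e); split.
  move=> e eE; have [a1 b1 c1 d1] := f1 e eE; have [a2 b2 c2 d2] := f2 e eE.
  split.
  - by rewrite addr_ge0 // mulr_ge0.
  - by apply: quad => //; apply: Ubox_ge0.
  - have := ler_wpM2l l0 c1; have := ler_wpM2l m0 c2; nra.
  - have := ler_wpM2l l0 d1; have := ler_wpM2l m0 d2; nra.
move=> i; rewrite /rflow.
rewrite (eq_bigr (fun e => l * F1 u1 e (X1 e) (Y1 e) + (1 - l) * F1 u2 e (X2 e) (Y2 e)));
  last by move=> e _; rewrite /F1; ring.
rewrite [X in _ + X <= _](eq_bigr (fun e => l * F2 u1 e (X1 e) (Y1 e) + (1 - l) * F2 u2 e (X2 e) (Y2 e)));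
  last by move=> e _; rewrite /F2; ring.
rewrite !big_split /= -!mulr_sumr.
have h1 := ler_wpM2l l0 (r1 i); have h2 := ler_wpM2l m0 (r2 i).
rewrite /rflow !mulrDr in h1 h2; lra.
Qed.

Lemma Ubox_convex u1 u2 l : Ubox u1 -> Ubox u2 -> 0 <= l <= 1 ->
  Ubox (fun i => l * u1 i + (1 - l) * u2 i).
Proof.
move=> ub1 ub2 /andP[l0 l1] i; have /andP[a1 b1] := ub1 i; have /andP[a2 b2] := ub2 i.
have m0 : 0 <= 1 - l by lra.
apply/andP; split; nra.
Qed.

Definition TR : topologicalType := R.
Definition PT := prod_topology (fun _ : 'I_n * 'I_n => TR).

Lemma cont_Pfw v e : continuous (Pfw g b v e).
Proof.
move=> t; rewrite /Pfw.
apply: cvgB; first apply: cvgD; first exact: cvg_cst.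
  apply: cvgMl_tmp; exact: continuous_sin.
apply: cvgMl_tmp; exact: continuous_cos.
Qed.

Lemma cont_Pbw v e : continuous (Pbw g b v e).
Proof.
move=> t; rewrite /Pbw.
apply: cvgB; first apply: cvgB; first exact: cvg_cst.
  apply: cvgMl_tmp; exact: continuous_sin.
apply: cvgMl_tmp; exact: continuous_cos.
Qed.

Lemma cont_comp (h : R -> R) e : continuous h -> continuous (fun th : PT => h (th e)).
Proof.
move=> hc th.
apply: (@continuous_comp PT TR TR (fun th : PT => th e) h).
  exact: (@proj_continuous _ (fun _ => TR) e).
exact: hc.
Qed.

Lemma cont_flow v i :
  continuous (fun th : PT =>
    \sum_(e in E | e.1 == i) Pfw g b v e (th e) + \sum_(e in E | e.2 == i) Pbw g b v e (th e) : R).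
Proof.
move=> th.
pose f1 := fun th : PT => \sum_(e in E | e.1 == i) Pfw g b v e (th e).
pose f2 := fun th : PT => \sum_(e in E | e.2 == i) Pbw g b v e (th e).
have h1 : continuous f1.
  exact: (@continuous_big TR _ +%R 0 (fun e => (e \in E) && (e.1 == i)) add_continuous PT
     (index_enum _) (fun e th => Pfw g b v e (th e)) (fun e _ => cont_comp _ e (cont_Pfw v e))).
have h2 : continuous f2.
  exact: (@continuous_big TR _ +%R 0 (fun e => (e \in E) && (e.2 == i)) add_continuous PT
     (index_enum _) (fun e th => Pbw g b v e (th e)) (fun e _ => cont_comp _ e (cont_Pbw v e))).
Timeout 60 exact: (cvgD (h1 th) (h2 th)).
Qed.

Lemma cont_flow' v i : continuous (fun th : PT => flow v th i).
Proof. exact: cont_flow. Qed.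

Lemma attain v y : (forall eps : R, 0 < eps -> exists th, inK th /\ forall i, flow v th i <= y i + eps) ->
  exists th, inK th /\ forall i, flow v th i <= y i.
Proof.
move=> H.
pose lo' e := if e \in E then thlo e.1 e.2 else 0.
pose hi' e := if e \in E then thhi e.1 e.2 else 0.
pose K : set PT := [set f : PT | forall e, `[lo' e, hi' e]%classic (f e)]%classic.
have Kc : compact K.
  have Kc' := (@tychonoff _ (fun _ => TR) (fun e => `[lo' e, hi' e]%classic)
            (fun e => @segment_compact R (lo' e) (hi' e))).
  exact Kc'.
pose tr (th : 'I_n * 'I_n -> R) := fun e => if e \in E then th e else 0.
have Ktr th : inK th -> K (tr th).
  move=> thK e; rewrite /= in_itv /= /tr /lo' /hi'.
  by case: ifP => eE //; [exact: thK | rewrite lexx].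
have ftr th i : flow v (tr th) i = flow v th i.
  rewrite /flow /tr; congr (_ + _); apply: eq_bigr => e /andP[-> _] //.
pose S m := [set th : PT | K th /\ forall i, flow v th i <= y i + (m.+1%:R)^-1]%classic.
pose F := filter_from setT S.
have FF : ProperFilter F.
  apply: filter_from_proper.
    apply: filter_fromT_filter; first by exists 0%N.
    move=> i j; exists (maxn i j) => th [Kth hth].
    have le1 (k : nat) : (k <= maxn i j)%N -> (maxn i j).+1%:R^-1 <= k.+1%:R^-1 :> R.
      move=> hk; rewrite lef_pV2 ?posrE ?ltr0Sn // ler_nat ltnS //.
    split; split => // k; apply: le_trans (hth k) _; rewrite lerD2l.
      by apply: le1; rewrite leq_maxl.
    by apply: le1; rewrite leq_maxr.
  move=> m _.
  have [th [thK hth]] := H (m.+1%:R^-1) (ltac:(by rewrite invr_gt0 ltr0Sn)).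
  by exists (tr th); split; [exact: Ktr | move=> i; rewrite ftr].
have FK : F K by exists 0%N => // th [].
have [p [Kp clp]] := Kc F FF FK.
exists p; split.
  move=> e eE; have := Kp e; rewrite /= in_itv /= /lo' /hi' eE //.
move=> i; rewrite leNgt; apply/negP => hlt.
pose c := (y i + flow v p i) / 2.
have c1 : y i < c by rewrite /c; lra.
have c2 : c < flow v p i by rewrite /c; lra.
have [k hk] := ltr_add_invr c1.
have Hnear : \forall th \near p, c < flow v th i.
  have hh := cvgr_gt _ (cont_flow' v i p) _ c2; apply: hh.
have [th [[Kth hth] hc]] := clp (S k) _ (ex_intro2 _ _ k I (fun _ h => h)) Hnear.
have h1 := hth i; simpl in hc, h1.
have h2 := le_lt_trans h1 hk.
have := lt_trans h2 hc; by rewrite ltxx.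
Qed.




Lemma Ubox_sq v : in_box vlo vhi v -> Ubox (fun i => v i ^+ 2).
Proof.
move=> vb i; have /andP[a c] := vb i; have [h _] := vpos i.
by apply/andP; split; nra.
Qed.

Lemma one_hull (A : ('I_n -> R) -> Prop) p : A p -> cvxhull A p.
Proof.
move=> Ap; exists 1%N, (fun _ => 1), (fun _ => p); split.
- by move=> _; exact: ler01.
- by rewrite big_ord1.
- by [].
- by move=> i; rewrite big_ord1 mul1r.
Qed.

Lemma main :
  let Ptheta := fun p => exists v, in_box vlo vhi v /\ Ptheta_v E g b thlo thhi v p in
  let Pset := fun p => Ptheta p /\ PP Pbar p in
  let cconvPtheta := fun p => exists v, in_box vlo vhi v /\
                                ccvxhull (Ptheta_v E g b thlo thhi v) p in
  forall x : 'I_n -> R,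
    (pareto Pset x <-> pareto (cvxhull Pset) x) /\
    (pareto (cvxhull Pset) x <-> pareto (fun p => cconvPtheta p /\ PP Pbar p) x).
Proof.
move=> Ptheta Pset cconv x.
have arcR v p : in_box vlo vhi v -> Ptheta_v E g b thlo thhi v p -> Rel (fun i => v i ^+ 2) p.
  move=> vb [th [thK pE]]; have [fe fl] := arc_rel v th vb thK.
  exists (fun e => v e.1 * v e.2 * cos (th e)), (fun e => v e.1 * v e.2 * sin (th e)).
  by split => // i; rewrite fl (pE i); exact: lexx.
have PsetU p : Pset p -> (exists u, Ubox u /\ Rel u p) /\ PP Pbar p.
  move=> [[v [vb pv]] pp]; split => //.
  by exists (fun i => v i ^+ 2); split; [exact: Ubox_sq | exact: arcR].
have UPset p : (exists u, Ubox u /\ Rel u p) /\ PP Pbar p ->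
    exists a, Pset a /\ forall i, a i <= p i.
  move=> [[u [ub [X [Y [fe rl]]]]] pp].
  have [th [thK fl]] := dom u X Y ub fe.
  have le_a i : flow (fun i => Num.sqrt (u i)) th i <= p i by exact: le_trans (fl i) (rl i).
  exists (flow (fun i => Num.sqrt (u i)) th); split => //.
  split; last by move=> i; exact: le_trans (le_a i) (pp i).
  exists (fun i => Num.sqrt (u i)); split; last by exists th.
  move=> i; have /andP[a c] := ub i; have [h h'] := vpos i.
  apply/andP; split.
    by rewrite -(ger0_norm (ltW h)) -sqrtr_sqr; exact: ler_wsqrtr.
  have hv : 0 <= vhi i by lra.
  by rewrite -(ger0_norm hv) -sqrtr_sqr; exact: ler_wsqrtr.
have Ucvx p : cvxhull Pset p -> (exists u, Ubox u /\ Rel u p) /\ PP Pbar p.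
  move=> hp; apply: (@cvx_closed R n (fun p => (exists u, Ubox u /\ Rel u p) /\ PP Pbar p)); last first.
    move: hp => [k [lam [pts [h1 h2 h3 h4]]]]; exists k, lam, pts; split => // j.
    exact: (PsetU _ (h3 j)).
  move=> p1 q1 l [[u1 [ub1 r1]] pp1] [[u2 [ub2 r2]] pp2] hl; split.
    exists (fun i => l * u1 i + (1 - l) * u2 i); split;
      [exact: Ubox_convex | exact: rel_convex].
  move=> i; have /andP[l0 l1] := hl; have := pp1 i; have := pp2 i; nra.
have part1 : pareto Pset x <-> pareto (cvxhull Pset) x.
  apply: pareto_sub; first by move=> p hp; exact: one_hull.
  by move=> p hp; exact: UPset (Ucvx p hp).
have part2 : pareto Pset x <-> pareto (fun p => cconv p /\ PP Pbar p) x.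
  apply: pareto_sub.
    move=> p [[v [vb pv]] pp]; split => //; exists v; split => //.
    move=> eps e0; exists p; split; first exact: one_hull.
    by move=> i; rewrite subrr normr0.
  move=> p [[v [vb cl]] pp].
  have key : forall eps : R, 0 < eps -> exists th, inK th /\ forall i, flow v th i <= p i + eps.
    move=> eps e0; have [z [hz zp]] := cl eps e0.
    have Rz : Rel (fun i => v i ^+ 2) z.
      apply: (@cvx_closed R n (Rel (fun i => v i ^+ 2))); last first.
        move: hz => [k [lam [pts [h1 h2 h3 h4]]]]; exists k, lam, pts; split => // j.
        exact: (arcR v _ vb (h3 j)).
      move=> p1 q1 l r1 r2 hl.
      have := rel_convex _ _ _ _ l (Ubox_sq v vb) (Ubox_sq v vb) r1 r2 hl.
      have -> : (fun i => l * v i ^+ 2 + (1 - l) * v i ^+ 2) = (fun i => v i ^+ 2).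
        by apply: funext => i; ring.
      by [].
    have [X [Y [fe rl]]] := Rz.
    have [th [thK fl]] := dom _ X Y (Ubox_sq v vb) fe.
    exists th; split => // i.
    have ev : (fun i => Num.sqrt (v i ^+ 2)) = v.
      apply: funext => j; rewrite sqrtr_sqr ger0_norm //.
      have /andP[a _] := vb j; have [h _] := vpos j; lra.
    rewrite ev in fl.
    have := zp i; rewrite ltr_norml => /andP[h _].
    have := fl i; have := rl i; lra.
  have [th [thK fl]] := attain v p key.
  exists (flow v th); split => //.
  split; last by move=> i; exact: le_trans (fl i) (pp i).
  by exists v; split => //; exists th.
split; first exact: part1.
by split => h; [exact: (part2.1 (part1.2 h)) | exact: (part1.1 (part2.2 h))].
Qed.

End Main.

Theorem theorem3 (R : realType) (n : nat) (E : {set 'I_n * 'I_n})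
    (g b thlo thhi : 'I_n -> 'I_n -> R) (vlo vhi Pbar : 'I_n -> R) :
  is_tree E ->
  (forall e, e \in E -> 0 <= g e.1 e.2 /\ 0 <= b e.1 e.2) ->
  (forall e, e \in E ->
     [/\ thlo e.1 e.2 <= 0, 0 <= thhi e.1 e.2,
         - (pi / 2) < thlo e.1 e.2 & thhi e.1 e.2 < pi / 2]) ->
  (forall i, 0 < vlo i /\ vlo i <= vhi i) ->
  let Ptheta := fun p => exists v, in_box vlo vhi v /\ Ptheta_v E g b thlo thhi v p in
  let Pset := fun p => Ptheta p /\ PP Pbar p in
  let cconvPtheta := fun p => exists v, in_box vlo vhi v /\
                                ccvxhull (Ptheta_v E g b thlo thhi v) p in
  forall x : 'I_n -> R,
    (pareto Pset x <-> pareto (cvxhull Pset) x) /\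
    (pareto (cvxhull Pset) x <-> pareto (fun p => cconvPtheta p /\ PP Pbar p) x).
Proof.
move=> _ gb thr vp; exact: (@main R n E g b thlo thhi vlo vhi Pbar gb thr vp).
Qed.
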